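(* Let $\Sigma_\iota[\lambda]:=\{\mathbf{x}\in \mathbb{Z}_\iota(\lambda)\mid \varphi(\mathbf{x})\ge 0 \text{ for all } \varphi\in\Xi_\iota[\lambda]\}$. Then $\Sigma_\iota[\lambda]$ is a subcrystal of $\mathrm{Im}(\Psi^{\lambda}_{\iota})$; that is, $\Sigma_\iota[\lambda]\subseteq \mathrm{Im}(\Psi^{\lambda}_{\iota})$ and for every $\mathbf{x}\in\Sigma_\iota[\lambda]$ and $i\in\{1,2\}$, each of $\tilde e_i\mathbf{x}$, $\tilde f_i\mathbf{x}$ is either $\mathbf{0}$ or lies in $\Sigma_\iota[\lambda]$.
   Context: Let $a_1,a_2\in\mathbb{Z}_{\ge1}$ with $a_1a_2>4$, let $A=\begin{pmatrix}2&-a_1\\-a_2&2\end{pmatrix}$, $I=\{1,2\}$, and let $\mathfrak g=\mathfrak g(A)$ be the associated Kac–Moody algebra with simple roots $\alpha_1,\alpha_2$, simple coroots $\alpha_1^\vee,\alpha_2^\vee$ (so $\langle\alpha_2,\alpha_1^\vee\rangle=-a_1$, $\langle\alpha_1,\alpha_2^\vee\rangle=-a_2$), fundamental weights $\Lambda_1,\Lambda_2$, weight lattice $P=\mathbb{Z}\Lambda_1\oplus\mathbb{Z}\Lambda_2$. Crystals are Kashiwara crystals with operators $\tilde e_i,\tilde f_i$ (taking values in the crystal or an extra element $\mathbf 0$), $\varepsilon_i,\varphi_i,\mathrm{wt}$. For $k\in\mathbb{Z}$ put $i_k=1$ if $k$ is odd and $i_k=2$ if $k$ is even; write $a_{i_k}$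 for $a_1$ or $a_2$ accordingly. Crystal $\mathbb{Z}^{+\infty}_{\ge0}$: elements $\hat x=(\dots,x_2,x_1)$, $x_k\in\mathbb{Z}_{\ge0}$, $x_k=0$ for $k\gg0$. For $k\ge1$ let $\sigma^+_k(\hat x)=x_k+\sum_{j>k}\langle\alpha_{i_j},\alpha_{i_k}^\vee\rangle x_j$, $\sigma^+_{(i)}=\max\{\sigma^+_k: k\ge1, i_k=i\}$, $M^+_{(i)}$ the set of such $k$ attaining the max. Then $\mathrm{wt}(\hat x)=-\sum_j x_j\alpha_{i_j}$, $\varepsilon_i=\sigma^+_{(i)}$, $\varphi_i=\varepsilon_i+\langle\mathrm{wt},\alpha_i^\vee\rangle$; $\tilde e_i$ subtracts $1$ from $x_{\max M^+_{(i)}}$ if $\sigma^+_{(i)}>0$ and gives $\mathbf 0$ otherwise; $\tilde f_i$ adds $1$ to $x_{\min M^+_{(i)}}$. Crystal $\mathbb{Z}^{-\infty}_{\le0}$: elements $\hat x=(x_0,x_{-1},\dots)$, $x_k\in\mathbb{Z}_{\le0}$, $x_k=0$ for $k\ll0$; for $k\le0$, $\sigma^-_k=-x_k-\sum_{j<k}\langle\alpha_{i_j},\alpha_{i_k}^\vee\rangle x_j$, $\sigma^-_{(i)}$ the max over $k\le0$ with $i_k=i$, $M^-_{(i)}$ the maximizers; $\mathrm{wt}=-\sum_j x_j\alpha_{i_j}$, $\varphi_i=\sigma^-_{(i)}$, $\varepsilon_i=\varphi_i-\langle\mathrm{wt},\alpha_i^\vee\rangle$; $\tilde e_i$ subtracts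 $1$ from $x_{\max M^-_{(i)}}$; $\tilde f_i$ adds $1$ to $x_{\min M^-_{(i)}}$ if $\sigma^-_{(i)}>0$, and is $\mathbf 0$ otherwise. For $\mu\in P$, $\mathbb{Z}_\iota(\mu)=\mathbb{Z}^{+\infty}_{\ge0}\otimes\mathcal T_\mu\otimes\mathbb{Z}^{-\infty}_{\le0}$, whose elements are $\mathbf x=(\dots,x_2,x_1)\otimes t_\mu\otimes(x_0,x_{-1},\dots)$, with: $\mathrm{wt}(\mathbf x)=\mu-\sum_{j\in\mathbb Z}x_j\alpha_{i_j}$; $\sigma_k(\mathbf x)=\sigma^+_k$ for $k\ge1$, $\sigma_k(\mathbf x)=\sigma^-_k-\langle\mathrm{wt}(\mathbf x),\alpha_{i_k}^\vee\rangle$ for $k\le0$; $\sigma_{(i)}=\max\{\sigma_k:i_k=i\}$, $M_{(i)}$ the maximizers; $\varepsilon_i=\sigma_{(i)}$, $\varphi_i=\varepsilon_i+\langle\mathrm{wt},\alpha_i^\vee\rangle$; if $\varepsilon_i>0$, $\tilde e_i$ subtracts $1$ from $x_{\max M_{(i)}}$, else $\tilde e_i\mathbf x=\mathbf 0$; if $\varphi_i>0$, $\tilde f_i$ adds $1$ to $x_{\min M_{(i)}}$, else $\tilde f_i\mathbf x=\mathbf 0$. Let $\mathcal B(\infty)$, $\mathcal B(-\infty)$ be the crystal bases of $U_q^-(\mathfrak g)$, $U_q^+(\mathfrak g)$, and $\Psi^+:\mathcal B(\infty)\hookrightarrow\mathbb{Z}^{+\infty}_{\ge0}$, $\Psi^-:\mathcal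 B(-\infty)\hookrightarrow\mathbb{Z}^{-\infty}_{\le0}$ the Nakashima–Zelevinsky embeddings of crystals for these sequences (sending the highest/lowest elements to the zero sequences). Set $\Psi^\mu_\iota=\Psi^+\otimes\mathrm{id}\otimes\Psi^-$, so $\mathrm{Im}(\Psi^\mu_\iota)=\mathrm{Im}(\Psi^+)\otimes t_\mu\otimes\mathrm{Im}(\Psi^-)\subseteq\mathbb Z_\iota(\mu)$. Put $\alpha=\frac{a_1a_2+\sqrt{a_1^2a_2^2-4a_1a_2}}{2a_2}$, $\beta=\frac{a_1a_2+\sqrt{a_1^2a_2^2-4a_1a_2}}{2a_1}$, $\gamma_k=\alpha$ for $k$ even and $\gamma_k=\beta$ for $k$ odd. Fix $\lambda=k_1\Lambda_1-k_2\Lambda_2$ with $k_1,k_2\in\mathbb Z_{>0}$ such that: if $a_1,a_2\ge2$, either $k_2\le k_1<(a_1-1)k_2$ or $k_1<k_2\le(a_2-1)k_1$; if $a_1=1$, $2k_1\le k_2\le(a_2-2)k_1$; if $a_2=1$, $2k_2\le k_1\le(a_1-2)k_2$. Define $p_0=k_2$, $p_1=k_1$, and for $m\ge0$: $p_{m+2}=a_2p_{m+1}-p_m$ ($m$ even), $p_{m+2}=a_1p_{m+1}-p_m$ ($m$ odd); for $m<0$: $p_m=a_2p_{m+1}-p_{m+2}$ ($m$ even), $p_m=a_1p_{m+1}-p_{m+2}$ ($m$ odd). For $k\in\mathbb Z$ let $\zeta_k$ be the linear function $\mathbf x\mapsto x_k$. Let $\Xi_\iota[\lambda]=\{\gamma_0p_0+\gamma_0\zeta_0-\zeta_1,\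 \gamma_1p_1+\zeta_0-\gamma_1\zeta_1\}\cup\{p_k-\zeta_k,\ \gamma_k\zeta_k-\zeta_{k+1},\ \gamma_{k+1}p_{k+1}-p_k+\zeta_k-\gamma_{k+1}\zeta_{k+1}\mid k\ge1\}\cup\{p_k+\zeta_k,\ \zeta_{k-1}-\gamma_k\zeta_k,\ \gamma_{k-1}p_{k-1}-p_k+\gamma_{k-1}\zeta_{k-1}-\zeta_k\mid k\le0\}$. *)

(* Defs.v *)
From Stdlib Require Import ZArith List Reals.
Import ListNotations.

Open Scope Z_scope.

Inductive idx := I1 | I2.

Definition idx_eqb (i j : idx) : bool :=
  match i, j with I1, I1 | I2, I2 => true | _, _ => false end.

Definition ik (k : Z) : idx := if Z.odd k then I1 else I2.

(** cartan a1 a2 j i = <alpha_j, alpha_i^vee> for A = [[2,-a1],[-a2,2]]. *)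
Definition cartan (a1 a2 : Z) (j i : idx) : Z :=
  match j, i with
  | I1, I1 => 2 | I2, I2 => 2
  | I2, I1 => - a1
  | I1, I2 => - a2
  end.

Definition zrange (lo hi : Z) : list Z :=
  map (fun n => lo + Z.of_nat n) (seq 0 (Z.to_nat (hi - lo + 1))).

Definition zsum (lo hi : Z) (f : Z -> Z) : Z :=
  fold_right Z.add 0 (map f (zrange lo hi)).

Definition lmax (l : list Z) (s : Z -> Z) : Z :=
  match l with
  | [] => 0
  | k :: l' => fold_right (fun j acc => Z.max (s j) acc) (s k) l'
  end.

Definition argmin_of (l : list Z) (s : Z -> Z) (m : Z) (dflt : Z) : Z :=
  fold_right (fun j acc => if s j =? m then Z.min j acc else acc) dflt l.

Definition argmax_of (l : list Z) (s : Z -> Z) (m : Z) (dflt : Z) : Z :=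
  fold_right (fun j acc => if s j =? m then Z.max j acc else acc) dflt l.

Definition par_filter (i : idx) (l : list Z) : list Z :=
  filter (fun k => idx_eqb (ik k) i) l.

Definition update (x : Z -> Z) (k0 d : Z) : Z -> Z :=
  fun k => if k =? k0 then x k + d else x k.

(** The integer N is a bound on
    the support; all the operators below are independent of the choice of a
    valid N (the window [-(N+2), N+2] contains all relevant indices). *)

Definition supp_plus (N : Z) (x : Z -> Z) : Prop :=
  forall k, (k < 1 \/ N < k) -> x k = 0.

Definition sigma_plus (a1 a2 N : Z) (x : Z -> Z) (k : Z) : Z :=
  x k + zsum (k + 1) N (fun j => cartan a1 a2 (ik j) (ik k) * x j).

Definition fplus (a1 a2 : Z) (i : idx) (N : Z) (x : Z -> Z) : Z -> Z :=
  let l := par_filter i (zrange 1 (N + 2)) in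
  let s := sigma_plus a1 a2 N x in
  update x (argmin_of l s (lmax l s) (N + 3)) 1.

(** Im(Psi^+): the image of B(infty) = the set generated from the zero
    sequence by the operators f~_i. *)
Inductive ImPlus (a1 a2 : Z) : (Z -> Z) -> Prop :=
| ImPlus0 : ImPlus a1 a2 (fun _ => 0)
| ImPlusF : forall (x : Z -> Z) (N : Z) (i : idx),
    ImPlus a1 a2 x -> 0 <= N -> supp_plus N x -> ImPlus a1 a2 (fplus a1 a2 i N x).

Definition supp_minus (N : Z) (x : Z -> Z) : Prop :=
  forall k, (k < - N \/ 0 < k) -> x k = 0.

Definition sigma_minus (a1 a2 N : Z) (x : Z -> Z) (k : Z) : Z :=
  - x k - zsum (- N) (k - 1) (fun j => cartan a1 a2 (ik j) (ik k) * x j).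

Definition eminus (a1 a2 : Z) (i : idx) (N : Z) (x : Z -> Z) : Z -> Z :=
  let l := par_filter i (zrange (- (N + 2)) 0) in
  let s := sigma_minus a1 a2 N x in
  update x (argmax_of l s (lmax l s) (- (N + 3))) (-1).

(** Im(Psi^-): the image of B(-infty) = the set generated from the zero
    sequence by the operators e~_i. *)
Inductive ImMinus (a1 a2 : Z) : (Z -> Z) -> Prop :=
| ImMinus0 : ImMinus a1 a2 (fun _ => 0)
| ImMinusE : forall (x : Z -> Z) (N : Z) (i : idx),
    ImMinus a1 a2 x -> 0 <= N -> supp_minus N x -> ImMinus a1 a2 (eminus a1 a2 i N x).

(** An element (...,x_2,x_1) (x) t_mu (x) (x_0,x_{-1},...) is a function
    x : Z -> Z; mu is given by its pairings mu i = <mu, alpha_i^vee>. *)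
Definition supported (N : Z) (x : Z -> Z) : Prop :=
  forall k, (k < - N \/ N < k) -> x k = 0.

Definition in_Ziota (x : Z -> Z) : Prop :=
  (forall k, 1 <= k -> 0 <= x k) /\ (forall k, k <= 0 -> x k <= 0) /\
  exists N, supported N x.

(** <wt(x), alpha_i^vee> with wt(x) = mu - sum_j x_j alpha_{i_j}. *)
Definition wt_pair (a1 a2 : Z) (mu : idx -> Z) (N : Z) (x : Z -> Z) (i : idx) : Z :=
  mu i - zsum (- N) N (fun j => x j * cartan a1 a2 (ik j) i).

Definition sigmaZ (a1 a2 : Z) (mu : idx -> Z) (N : Z) (x : Z -> Z) (k : Z) : Z :=
  if 1 <=? k then sigma_plus a1 a2 N x k
  else sigma_minus a1 a2 N x k - wt_pair a1 a2 mu N x (ik k).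

Definition windowZ (i : idx) (N : Z) : list Z := par_filter i (zrange (- (N + 2)) (N + 2)).

Definition epsZ (a1 a2 : Z) (mu : idx -> Z) (i : idx) (N : Z) (x : Z -> Z) : Z :=
  lmax (windowZ i N) (sigmaZ a1 a2 mu N x).

Definition phiZ (a1 a2 : Z) (mu : idx -> Z) (i : idx) (N : Z) (x : Z -> Z) : Z :=
  epsZ a1 a2 mu i N x + wt_pair a1 a2 mu N x i.

(** e~_i, f~_i on Z_iota(mu); None stands for the extra element 0. *)
Definition etildeZ (a1 a2 : Z) (mu : idx -> Z) (i : idx) (N : Z) (x : Z -> Z)
  : option (Z -> Z) :=
  let m := epsZ a1 a2 mu i N x in
  if 0 <? m then
    Some (update x (argmax_of (windowZ i N) (sigmaZ a1 a2 mu N x) m (- (N + 3))) (-1))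
  else None.

Definition ftildeZ (a1 a2 : Z) (mu : idx -> Z) (i : idx) (N : Z) (x : Z -> Z)
  : option (Z -> Z) :=
  let m := epsZ a1 a2 mu i N x in
  if 0 <? phiZ a1 a2 mu i N x then
    Some (update x (argmin_of (windowZ i N) (sigmaZ a1 a2 mu N x) m (N + 3)) 1)
  else None.

(** Im(Psi^mu_iota) = Im(Psi^+) (x) t_mu (x) Im(Psi^-). *)
Definition ImPsi (a1 a2 : Z) (x : Z -> Z) : Prop :=
  (exists y, ImPlus a1 a2 y /\ forall k, 1 <= k -> x k = y k) /\
  (exists z, ImMinus a1 a2 z /\ forall k, k <= 0 -> x k = z k).

Definition lam (k1 k2 : Z) (i : idx) : Z :=
  match i with I1 => k1 | I2 => - k2 end.

Definition cpar (a1 a2 m : Z) : Z := if Z.even m then a2 else a1.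

(** pp n = (p_n, p_{n+1}) for n >= 0 *)
Fixpoint pp (a1 a2 k1 k2 : Z) (n : nat) : Z * Z :=
  match n with
  | O => (k2, k1)
  | S n' => let (u, v) := pp a1 a2 k1 k2 n' in
            (v, cpar a1 a2 (Z.of_nat n') * v - u)
  end.

(** pn n = (p_{-n}, p_{-n+1}) for n >= 0 *)
Fixpoint pn (a1 a2 k1 k2 : Z) (n : nat) : Z * Z :=
  match n with
  | O => (k2, k1)
  | S n' => let (u, v) := pn a1 a2 k1 k2 n' in
            (cpar a1 a2 (- Z.of_nat n) * u - v, u)
  end.

Definition pseq (a1 a2 k1 k2 : Z) (m : Z) : Z :=
  if 0 <=? m then fst (pp a1 a2 k1 k2 (Z.to_nat m))
  else fst (pn a1 a2 k1 k2 (Z.to_nat (- m))).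

Open Scope R_scope.

Definition alphaR (a1 a2 : Z) : R :=
  (IZR (a1 * a2) + sqrt (IZR (a1 * a1 * a2 * a2 - 4 * a1 * a2))) / (2 * IZR a2).
Definition betaR (a1 a2 : Z) : R :=
  (IZR (a1 * a2) + sqrt (IZR (a1 * a1 * a2 * a2 - 4 * a1 * a2))) / (2 * IZR a1).
Definition gammaR (a1 a2 : Z) (k : Z) : R :=
  if Z.even k then alphaR a1 a2 else betaR a1 a2.

Definition Xi_nonneg (a1 a2 k1 k2 : Z) (x : Z -> Z) : Prop :=
  let p m := IZR (pseq a1 a2 k1 k2 m) in
  let g := gammaR a1 a2 in
  let z k := IZR (x k) in
  0 <= g 0%Z * p 0%Z + g 0%Z * z 0%Z - z 1%Z /\
  0 <= g 1%Z * p 1%Z + z 0%Z - g 1%Z * z 1%Z /\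
  (forall k : Z, (1 <= k)%Z ->
     0 <= p k - z k /\
     0 <= g k * z k - z (k + 1)%Z /\
     0 <= g (k + 1)%Z * p (k + 1)%Z - p k + z k - g (k + 1)%Z * z (k + 1)%Z) /\
  (forall k : Z, (k <= 0)%Z ->
     0 <= p k + z k /\
     0 <= z (k - 1)%Z - g k * z k /\
     0 <= g (k - 1)%Z * p (k - 1)%Z - p k + g (k - 1)%Z * z (k - 1)%Z - z k).

Definition SigmaSet (a1 a2 k1 k2 : Z) (x : Z -> Z) : Prop :=
  in_Ziota x /\ Xi_nonneg a1 a2 k1 k2 x.

Close Scope R_scope.

Definition standing_hyps (a1 a2 k1 k2 : Z) : Prop :=
  1 <= a1 /\ 1 <= a2 /\ 4 < a1 * a2 /\ 0 < k1 /\ 0 < k2 /\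
  (2 <= a1 -> 2 <= a2 ->
     (k2 <= k1 /\ k1 < (a1 - 1) * k2) \/ (k1 < k2 /\ k2 <= (a2 - 1) * k1)) /\
  (a1 = 1 -> 2 * k1 <= k2 /\ k2 <= (a2 - 2) * k1) /\
  (a2 = 1 -> 2 * k2 <= k1 /\ k1 <= (a1 - 2) * k2).

(* Main.v *)
Require Import Defs.
From Stdlib Require Import ZArith List Reals.
From Stdlib Require Import Lia Lra Psatz FunctionalExtensionality Classical.
Import ListNotations.

Open Scope Z_scope.
Open Scope bool_scope.

Lemma zsum_nil lo hi f : hi < lo -> zsum lo hi f = 0.
Proof.
  intros H. unfold zsum, zrange.
  replace (Z.to_nat (hi - lo + 1)) with 0%nat by lia. reflexivity.
Qed.

Lemma zsum_first lo hi f : lo <= hi -> zsum lo hi f = f lo + zsum (lo+1) hi f.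
Proof.
  intros H. unfold zsum, zrange.
  replace (Z.to_nat (hi - lo + 1)) with (S (Z.to_nat (hi - (lo+1) + 1))) by lia.
  simpl. rewrite Z.add_0_r. f_equal.
  rewrite <- seq_shift.
  rewrite !map_map. f_equal. apply map_ext. intros a. f_equal. lia.
Qed.

Lemma zsum_ind_gen (P : Z -> Z -> Prop) :
  (forall lo hi, hi < lo -> P lo hi) ->
  (forall lo hi, lo <= hi -> P (lo+1) hi -> P lo hi) ->
  forall lo hi, P lo hi.
Proof.
  intros H0 H1 lo hi.
  remember (Z.to_nat (hi - lo + 1)) as n eqn:Hn. revert lo Hn.
  induction n; intros lo Hn.
  - apply H0. lia.
  - apply H1. lia. apply IHn. lia.
Qed.

Lemma zsum_ext lo hi f g : (forall j, lo <= j <= hi -> f j = g j) -> zsum lo hi f = zsum lo hi g.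
Proof.
  revert lo hi. apply (zsum_ind_gen (fun lo hi => (forall j, lo <= j <= hi -> f j = g j) -> zsum lo hi f = zsum lo hi g)).
  - intros. rewrite !zsum_nil; auto.
  - intros lo hi H IH Hfg. rewrite !(zsum_first lo hi) by auto. rewrite Hfg by lia. rewrite IH; auto.
    intros; apply Hfg; lia.
Qed.

Lemma zsum_zero lo hi f : (forall j, lo <= j <= hi -> f j = 0) -> zsum lo hi f = 0.
Proof.
  revert lo hi. apply (zsum_ind_gen (fun lo hi => (forall j, lo <= j <= hi -> f j = 0) -> zsum lo hi f = 0)).
  - intros. rewrite !zsum_nil; auto.
  - intros lo hi H IH Hf. rewrite zsum_first by auto. rewrite Hf by lia. rewrite IH; auto.
    intros; apply Hf; lia.
Qed.

Lemma zsum_split lo b hi f : lo <= b + 1 -> b <= hi -> zsum lo hi f = zsum lo b f + zsum (b+1) hi f.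
Proof.
  intros H1 H2. remember (Z.to_nat (b + 1 - lo)) as n eqn:Hn. revert lo H1 Hn.
  induction n; intros lo H1 Hn.
  - replace lo with (b+1) by lia. rewrite (zsum_nil (b+1) b) by lia. lia.
  - rewrite (zsum_first lo hi) by lia. rewrite (zsum_first lo b) by lia.
    rewrite (IHn (lo+1)) by lia. lia.
Qed.

Lemma zsum_add lo hi f g : zsum lo hi (fun j => f j + g j) = zsum lo hi f + zsum lo hi g.
Proof.
  revert lo hi. apply zsum_ind_gen.
  - intros. rewrite !zsum_nil; auto.
  - intros lo hi H IH. rewrite !(zsum_first lo hi) by auto. rewrite IH. lia.
Qed.

Lemma zsum_delta lo hi k d :
  zsum lo hi (fun j => if j =? k then d else 0) = if (lo <=? k) && (k <=? hi) then d else 0.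
Proof.
  destruct (lo <=? k) eqn:E1; destruct (k <=? hi) eqn:E2; simpl;
    try (apply zsum_zero; intros j Hj; destruct (Z.eqb_spec j k); lia).
  rewrite (zsum_split lo (k-1) hi) by lia.
  rewrite (zsum_first (k-1+1) hi) by lia.
  rewrite zsum_zero. rewrite (zsum_zero (k-1+1+1)).
  replace (k-1+1) with k by lia. rewrite Z.eqb_refl. lia.
  intros j Hj; destruct (Z.eqb_spec j k); lia.
  intros j Hj; destruct (Z.eqb_spec j k); lia.
Qed.

Open Scope Z_scope.
Open Scope bool_scope.

Lemma in_zrange lo hi j : In j (zrange lo hi) <-> lo <= j <= hi.
Proof.
  unfold zrange. rewrite in_map_iff. split.
  - intros [n [Hn Hin]]. apply in_seq in Hin. lia.
  - intros H. exists (Z.to_nat (j - lo)). split. lia. apply in_seq. lia.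
Qed.

Lemma idx_eqb_iff a b : idx_eqb a b = true <-> a = b.
Proof. destruct a, b; simpl; split; congruence. Qed.

Lemma in_par i lo hi j : In j (par_filter i (zrange lo hi)) <-> (lo <= j <= hi /\ ik j = i).
Proof.
  unfold par_filter. rewrite filter_In, in_zrange, idx_eqb_iff. tauto.
Qed.

Lemma lmax_ge l s j : In j l -> s j <= lmax l s.
Proof.
  destruct l as [|k l']; simpl. tauto.
  intros [<-|H].
  - induction l'; simpl; lia.
  - induction l'; simpl in *. tauto. destruct H as [<-|H]; [lia|]. specialize (IHl' H). lia.
Qed.

Lemma lmax_in l s : l <> [] -> exists j, In j l /\ s j = lmax l s.
Proof.
  destruct l as [|k l']; simpl. tauto. intros _.
  induction l' as [|a l' IH]; simpl.
  - exists k; auto.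
  - destruct IH as [j [Hj Hs]].
    destruct (Z.max_spec (s a) (fold_right (fun j acc => Z.max (s j) acc) (s k) l')) as [[_ E]|[_ E]];
    rewrite E.
    + exists j. split; auto. simpl in Hj. destruct Hj; auto.
    + exists a. auto.
Qed.

Lemma lmax_unique l s M : (exists j, In j l /\ s j = M) -> (forall j, In j l -> s j <= M) -> lmax l s = M.
Proof.
  intros [j [Hj Hs]] Hle.
  assert (l <> []) by (intro; subst; contradiction).
  destruct (lmax_in l s H) as [j' [Hj' Hs']].
  specialize (Hle j' Hj'). pose proof (lmax_ge l s j Hj). lia.
Qed.

Lemma argmax_spec l s m d :
  (forall j, In j l -> d < j) ->
  let r := argmax_of l s m d in
  (forall j, In j l -> s j = m -> j <= r) /\ (r = d \/ (In r l /\ s r = m)).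
Proof.
  induction l as [|a l IH]; simpl; intros Hd.
  - split; auto. tauto.
  - destruct IH as [H1 H2]. intros; auto.
    destruct (Z.eqb_spec (s a) m).
    + split.
      * intros j [<-|Hj] Hs; [lia|]. specialize (H1 j Hj Hs). lia.
      * destruct (Z.max_spec a (argmax_of l s m d)) as [[_ E]|[_ E]]; rewrite E.
        -- destruct H2 as [H2|H2]; [|tauto]. rewrite H2 in *. specialize (Hd a (or_introl eq_refl)). lia.
        -- right; auto.
    + split.
      * intros j [<-|Hj] Hs; [congruence|]. auto.
      * destruct H2; auto. right. tauto.
Qed.

Lemma argmin_spec l s m d :
  (forall j, In j l -> j < d) ->
  let r := argmin_of l s m d in
  (forall j, In j l -> s j = m -> r <= j) /\ (r = d \/ (In r l /\ s r = m)).
Proof.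
  induction l as [|a l IH]; simpl; intros Hd.
  - split; auto. tauto.
  - destruct IH as [H1 H2]. intros; auto.
    destruct (Z.eqb_spec (s a) m).
    + split.
      * intros j [<-|Hj] Hs; [lia|]. specialize (H1 j Hj Hs). lia.
      * destruct (Z.min_spec a (argmin_of l s m d)) as [[_ E]|[_ E]]; rewrite E.
        -- right; auto.
        -- destruct H2 as [H2|H2]; [|tauto]. rewrite H2 in *. specialize (Hd a (or_introl eq_refl)). lia.
    + split.
      * intros j [<-|Hj] Hs; [congruence|]. auto.
      * destruct H2; auto. right. tauto.
Qed.

Lemma argmax_max l s d :
  l <> [] -> (forall j, In j l -> d < j) ->
  let m := lmax l s in let r := argmax_of l s m d in
  In r l /\ s r = m /\ (forall j, In j l -> s j <= m) /\ (forall j, In j l -> s j = m -> j <= r).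
Proof.
  intros Hne Hd m r.
  destruct (argmax_spec l s m d Hd) as [H1 H2]. fold r in H1, H2.
  destruct (lmax_in l s Hne) as [j [Hj Hs]].
  assert (r <> d). { intro E. specialize (H1 j Hj Hs). specialize (Hd j Hj). lia. }
  destruct H2 as [H2|[H2 H3]]; [contradiction|].
  repeat split; auto. intros; apply lmax_ge; auto.
Qed.

Lemma argmin_max l s d :
  l <> [] -> (forall j, In j l -> j < d) ->
  let m := lmax l s in let r := argmin_of l s m d in
  In r l /\ s r = m /\ (forall j, In j l -> s j <= m) /\ (forall j, In j l -> s j = m -> r <= j).
Proof.
  intros Hne Hd m r.
  destruct (argmin_spec l s m d Hd) as [H1 H2]. fold r in H1, H2.
  destruct (lmax_in l s Hne) as [j [Hj Hs]].
  assert (r <> d). { intro E. specialize (H1 j Hj Hs). specialize (Hd j Hj). lia. }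
  destruct H2 as [H2|[H2 H3]]; [contradiction|].
  repeat split; auto. intros; apply lmax_ge; auto.
Qed.

Lemma argmin_unique l s m d k :
  (forall j, In j l -> j < d) -> In k l -> s k = m -> (forall j, In j l -> s j = m -> k <= j) ->
  argmin_of l s m d = k.
Proof.
  intros Hd Hk Hs Hmin. destruct (argmin_spec l s m d Hd) as [H1 H2].
  specialize (H1 k Hk Hs). destruct H2 as [H2|[H2 H3]].
  - specialize (Hd k Hk). lia.
  - specialize (Hmin _ H2 H3). lia.
Qed.

Lemma argmax_unique l s m d k :
  (forall j, In j l -> d < j) -> In k l -> s k = m -> (forall j, In j l -> s j = m -> j <= k) ->
  argmax_of l s m d = k.
Proof.
  intros Hd Hk Hs Hmin. destruct (argmax_spec l s m d Hd) as [H1 H2].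
  specialize (H1 k Hk Hs). destruct H2 as [H2|[H2 H3]].
  - specialize (Hd k Hk). lia.
  - specialize (Hmin _ H2 H3). lia.
Qed.

Open Scope Z_scope.
Open Scope bool_scope.

Lemma odd_add2 k : Z.odd (k+2) = Z.odd k.
Proof. rewrite Z.odd_add. simpl. destruct (Z.odd k); reflexivity. Qed.
Lemma even_add2 k : Z.even (k+2) = Z.even k.
Proof. rewrite Z.even_add. simpl. destruct (Z.even k); reflexivity. Qed.
Lemma odd_add1 k : Z.odd (k+1) = negb (Z.odd k).
Proof. rewrite Z.odd_add. simpl. destruct (Z.odd k); reflexivity. Qed.
Lemma even_odd k : Z.even k = negb (Z.odd k).
Proof. rewrite <- Z.negb_odd. reflexivity. Qed.

Lemma ik_add2 k : ik (k+2) = ik k.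
Proof. unfold ik. rewrite odd_add2. reflexivity. Qed.

Lemma cartan_same a1 a2 i : cartan a1 a2 i i = 2.
Proof. destruct i; reflexivity. Qed.

Lemma cartan_next a1 a2 k : cartan a1 a2 (ik (k+1)) (ik k) = - cpar a1 a2 k.
Proof.
  unfold ik, cpar. rewrite odd_add1, even_odd. destruct (Z.odd k); reflexivity.
Qed.

Lemma cpar_add2 a1 a2 k : cpar a1 a2 (k+2) = cpar a1 a2 k.
Proof. unfold cpar. rewrite even_add2. reflexivity. Qed.

Lemma pseq_nat a1 a2 k1 k2 n : pseq a1 a2 k1 k2 (Z.of_nat n) = fst (pp a1 a2 k1 k2 n).
Proof.
  unfold pseq. replace (0 <=? Z.of_nat n) with true by (symmetry; apply Z.leb_le; lia).
  rewrite Nat2Z.id. reflexivity.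
Qed.

Lemma pseq_neg a1 a2 k1 k2 n : pseq a1 a2 k1 k2 (- Z.of_nat n) = fst (pn a1 a2 k1 k2 n).
Proof.
  destruct n as [|n].
  - reflexivity.
  - unfold pseq. replace (0 <=? - Z.of_nat (S n)) with false by (symmetry; apply Z.leb_gt; lia).
    rewrite Z.opp_involutive, Nat2Z.id. reflexivity.
Qed.

Lemma pp_S a1 a2 k1 k2 n :
  fst (pp a1 a2 k1 k2 (S n)) = snd (pp a1 a2 k1 k2 n) /\
  snd (pp a1 a2 k1 k2 (S n)) = cpar a1 a2 (Z.of_nat n) * snd (pp a1 a2 k1 k2 n) - fst (pp a1 a2 k1 k2 n).
Proof. simpl. destruct (pp a1 a2 k1 k2 n). simpl. auto. Qed.

Lemma pn_S a1 a2 k1 k2 n :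
  fst (pn a1 a2 k1 k2 (S n)) = cpar a1 a2 (- Z.of_nat (S n)) * fst (pn a1 a2 k1 k2 n) - snd (pn a1 a2 k1 k2 n) /\
  snd (pn a1 a2 k1 k2 (S n)) = fst (pn a1 a2 k1 k2 n).
Proof. cbn [pn]. destruct (pn a1 a2 k1 k2 n). simpl. auto. Qed.

Lemma pseq_rec a1 a2 k1 k2 m :
  pseq a1 a2 k1 k2 m - cpar a1 a2 m * pseq a1 a2 k1 k2 (m+1) + pseq a1 a2 k1 k2 (m+2) = 0.
Proof.
  destruct (Z_le_gt_dec 0 m).
  - replace m with (Z.of_nat (Z.to_nat m)) by lia. set (n := Z.to_nat m).
    replace (Z.of_nat n + 1) with (Z.of_nat (S n)) by lia.
    replace (Z.of_nat n + 2) with (Z.of_nat (S (S n))) by lia.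
    rewrite !pseq_nat.
    destruct (pp_S a1 a2 k1 k2 (S n)) as [A B]. destruct (pp_S a1 a2 k1 k2 n) as [C D].
    rewrite A, D, C. lia.
  - replace m with (- Z.of_nat (S (Z.to_nat (- m - 1)))) by lia. set (n := Z.to_nat (-m-1)).
    replace (- Z.of_nat (S n) + 1) with (- Z.of_nat n) by lia.
    rewrite !pseq_neg.
    destruct (pn_S a1 a2 k1 k2 n) as [A B]. rewrite A.
    destruct n as [|n].
    + simpl. unfold pseq. simpl. lia.
    + replace (- Z.of_nat (S (S n)) + 2) with (- Z.of_nat n) by lia.
      rewrite pseq_neg. destruct (pn_S a1 a2 k1 k2 n) as [C D]. rewrite D. lia.
Qed.

Lemma pseq_0 a1 a2 k1 k2 : pseq a1 a2 k1 k2 0 = k2.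
Proof. reflexivity. Qed.
Lemma pseq_1 a1 a2 k1 k2 : pseq a1 a2 k1 k2 1 = k1.
Proof. reflexivity. Qed.

Open Scope Z_scope.
Open Scope bool_scope.

Open Scope R_scope.

Lemma ab_facts a1 a2 : (1 <= a1)%Z -> (1 <= a2)%Z -> (4 < a1 * a2)%Z ->
  0 < alphaR a1 a2 /\ 0 < betaR a1 a2 /\
  betaR a1 a2 + / alphaR a1 a2 = IZR a2 /\ alphaR a1 a2 + / betaR a1 a2 = IZR a1.
Proof.
  intros H1 H2 H3.
  unfold alphaR, betaR.
  set (D := (a1 * a1 * a2 * a2 - 4 * a1 * a2)%Z).
  assert (HD : (0 <= D)%Z) by (unfold D; nia).
  set (s := sqrt (IZR D)).
  assert (Hs0 : 0 <= s) by apply sqrt_pos.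
  assert (Hs2 : s * s = IZR D) by (apply sqrt_sqrt; apply IZR_le; lia).
  unfold D in Hs2. rewrite !minus_IZR, !mult_IZR in Hs2. rewrite mult_IZR.
  assert (A1 : 1 <= IZR a1) by (apply IZR_le; lia).
  assert (A2 : 1 <= IZR a2) by (apply IZR_le; lia).
  set (x := IZR a1) in *. set (y := IZR a2) in *.
  assert (Pp : 0 < x * y) by nra.
  assert (0 < (x * y + s) / (2 * y)) by (apply Rdiv_lt_0_compat; lra).
  assert (0 < (x * y + s) / (2 * x)) by (apply Rdiv_lt_0_compat; lra).
  repeat split; auto.
  - field_simplify_eq. nra. all: try lra.
  - field_simplify_eq. nra. all: try lra.
Qed.


Lemma gam_pos a1 a2 k : (1 <= a1)%Z -> (1 <= a2)%Z -> (4 < a1 * a2)%Z -> 0 < gammaR a1 a2 k.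
Proof. intros. destruct (ab_facts a1 a2) as (?&?&?&?); auto. unfold gammaR; destruct (Z.even k); auto. Qed.

Lemma gam_add2 a1 a2 k : gammaR a1 a2 (k+2) = gammaR a1 a2 k.
Proof. unfold gammaR. rewrite even_add2. reflexivity. Qed.

Lemma cpar_gam a1 a2 k : (1 <= a1)%Z -> (1 <= a2)%Z -> (4 < a1 * a2)%Z ->
  IZR (cpar a1 a2 k) = gammaR a1 a2 (k+1) + / gammaR a1 a2 k.
Proof.
  intros. destruct (ab_facts a1 a2) as (?&?&?&?); auto.
  unfold gammaR, cpar. rewrite !even_odd, odd_add1. destruct (Z.odd k); simpl; auto.
Qed.

Definition pR a1 a2 k1 k2 k := IZR (pseq a1 a2 k1 k2 k).

Definition Agen a1 a2 k1 k2 (k : Z) (u v : R) : R :=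
  if (1 <=? k)%Z then gammaR a1 a2 k * u - v
  else if (k =? 0)%Z then gammaR a1 a2 k * pR a1 a2 k1 k2 k + gammaR a1 a2 k * u - v
  else gammaR a1 a2 k * pR a1 a2 k1 k2 k - pR a1 a2 k1 k2 (k+1) + gammaR a1 a2 k * u - v.

Definition Bgen a1 a2 k1 k2 (k : Z) (u v : R) : R :=
  if (1 <=? k)%Z then gammaR a1 a2 (k+1) * pR a1 a2 k1 k2 (k+1) - pR a1 a2 k1 k2 k + u - gammaR a1 a2 (k+1) * v
  else if (k =? 0)%Z then gammaR a1 a2 (k+1) * pR a1 a2 k1 k2 (k+1) + u - gammaR a1 a2 (k+1) * v
  else u - gammaR a1 a2 (k+1) * v.

Definition corr (k1 k2 k : Z) : Z := if (k =? -1)%Z then - k1 else if (k =? 0)%Z then k2 else 0.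

Lemma Agen_lin a1 a2 k1 k2 k u v t s :
  Agen a1 a2 k1 k2 k (u + t) (v + s) = Agen a1 a2 k1 k2 k u v + gammaR a1 a2 k * t - s.
Proof. unfold Agen. destruct (1 <=? k)%Z; [|destruct (k =? 0)%Z]; ring. Qed.

Lemma Bgen_lin a1 a2 k1 k2 k u v t s :
  Bgen a1 a2 k1 k2 k (u + t) (v + s) = Bgen a1 a2 k1 k2 k u v + t - gammaR a1 a2 (k+1) * s.
Proof. unfold Bgen. destruct (1 <=? k)%Z; [|destruct (k =? 0)%Z]; ring. Qed.

Lemma D_AB a1 a2 k1 k2 (z : Z -> Z) k : (1 <= a1)%Z -> (1 <= a2)%Z -> (4 < a1 * a2)%Z ->
  IZR ((z k - cpar a1 a2 k * z (k+1) + z (k+2) + corr k1 k2 k)%Z) =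
    Agen a1 a2 k1 k2 k (IZR (z k)) (IZR (z (k+1)%Z)) / gammaR a1 a2 k
    - Agen a1 a2 k1 k2 (k+1)%Z (IZR (z (k+1)%Z)) (IZR (z (k+2)%Z)) /\
  IZR ((z k - cpar a1 a2 k * z (k+1) + z (k+2) + corr k1 k2 k)%Z) =
    Bgen a1 a2 k1 k2 k (IZR (z k)) (IZR (z (k+1)%Z))
    - Bgen a1 a2 k1 k2 (k+1)%Z (IZR (z (k+1)%Z)) (IZR (z (k+2)%Z)) / gammaR a1 a2 k.
Proof.
  intros H1 H2 H3.
  pose proof (gam_pos a1 a2 k H1 H2 H3) as Gp.
  pose proof (cpar_gam a1 a2 k H1 H2 H3) as Cg.
  pose proof (gam_add2 a1 a2 k) as G2.
  pose proof (pseq_rec a1 a2 k1 k2 k) as Pr.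
  assert (Pr' : pR a1 a2 k1 k2 (k+2)%Z = IZR (cpar a1 a2 k) * pR a1 a2 k1 k2 (k+1)%Z - pR a1 a2 k1 k2 k).
  { unfold pR. rewrite <- mult_IZR, <- minus_IZR. f_equal. lia. }
  unfold Agen, Bgen, corr.
  replace (k+1+1)%Z with (k+2)%Z by ring.
  rewrite G2.
  rewrite !plus_IZR, !minus_IZR, !mult_IZR.
  rewrite Cg in *. rewrite Pr'.
  set (g := gammaR a1 a2 k) in *. set (h := gammaR a1 a2 (k+1)%Z) in *.
  destruct (Z.leb_spec 1 k); destruct (Z.leb_spec 1 (k+1)); destruct (Z.eqb_spec k 0);
    destruct (Z.eqb_spec (k+1) 0); destruct (Z.eqb_spec k (-1)); try lia.
  all: try (assert (E : pR a1 a2 k1 k2 k = IZR k2) by (subst; reflexivity)).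
  all: try (assert (E' : pR a1 a2 k1 k2 (k+2)%Z = IZR k1) by (subst; reflexivity)).
  all: rewrite ?opp_IZR; try rewrite E; try (rewrite <- E'; rewrite Pr').
  all: split; field_simplify_eq; auto; try lra.
Qed.

Open Scope Z_scope.
Open Scope bool_scope.

Definition Tz a1 a2 N (x : Z -> Z) k := zsum (k+1) N (fun j => cartan a1 a2 (ik j) (ik k) * x j).
Definition Uz a1 a2 N (x : Z -> Z) k := zsum (-N) (k-1) (fun j => cartan a1 a2 (ik j) (ik k) * x j).

Lemma T_rec a1 a2 N x k : (forall j, N < j -> x j = 0) ->
  Tz a1 a2 N x k = - cpar a1 a2 k * x (k+1) + 2 * x (k+2) + Tz a1 a2 N x (k+2).
Proof.
  intros Hx. unfold Tz.
  assert (Hext : zsum (k+2+1) N (fun j => cartan a1 a2 (ik j) (ik (k+2)) * x j)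
               = zsum (k+1+1+1) N (fun j => cartan a1 a2 (ik j) (ik k) * x j)).
  { replace (k+1+1+1) with (k+2+1) by ring. apply zsum_ext. intros. rewrite ik_add2. auto. }
  rewrite Hext.
  destruct (Z_le_gt_dec (k+1) N).
  - rewrite zsum_first by lia. rewrite cartan_next.
    destruct (Z_le_gt_dec (k+1+1) N).
    + rewrite (zsum_first (k+1+1)) by lia. replace (k+1+1) with (k+2) by ring.
      replace (ik (k+2)) with (ik k) by (symmetry; apply ik_add2). rewrite cartan_same.
      replace (k+2+1) with (k+1+1+1) by ring. ring.
    + rewrite !zsum_nil by lia. rewrite (Hx (k+2)) by lia. ring.
  - rewrite !zsum_nil by lia. rewrite (Hx (k+2)) by lia. rewrite (Hx (k+1)) by lia. ring.
Qed.

Lemma U_rec a1 a2 N x k : 0 <= N -> (forall j, j < -N -> x j = 0) ->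
  Uz a1 a2 N x (k+2) = Uz a1 a2 N x k + 2 * x k - cpar a1 a2 k * x (k+1).
Proof.
  intros HN Hx. unfold Uz.
  assert (Hext : zsum (-N) (k-1) (fun j => cartan a1 a2 (ik j) (ik k) * x j)
               = zsum (-N) (k-1) (fun j => cartan a1 a2 (ik j) (ik (k+2)) * x j)).
  { apply zsum_ext. intros. rewrite ik_add2. auto. }
  rewrite Hext. replace (k+2-1) with (k+1) by ring.
  destruct (Z_le_gt_dec (-N) k).
  - rewrite (zsum_split (-N) (k-1) (k+1)) by lia.
    rewrite (zsum_first (k-1+1)) by lia. rewrite (zsum_first (k-1+1+1)) by lia.
    rewrite (zsum_nil (k-1+1+1+1)) by lia. replace (k-1+1+1) with (k+1) by ring.
    replace (k-1+1) with k by ring. rewrite ik_add2, cartan_same.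
    replace (ik (k+2)) with (ik k) by (symmetry; apply ik_add2). rewrite cartan_next. ring.
  - rewrite (zsum_nil (-N) (k-1)) by lia. rewrite (Hx k) by lia.
    destruct (Z.eq_dec k (-N-1)).
    + subst k. replace (-N-1+1) with (-N) by ring. rewrite zsum_first by lia.
      rewrite zsum_nil by lia. replace (ik (-N-1+2)) with (ik (-N-1)) by (symmetry; apply ik_add2).
      pose proof (cartan_next a1 a2 (-N-1)) as C. replace (-N-1+1) with (-N) in C by ring. rewrite C. ring.
    + rewrite zsum_nil by lia. rewrite (Hx (k+1)) by lia. ring.
Qed.

Lemma sigmaZ_unif a1 a2 mu N x k : 0 <= N -> supported N x -> -(N+2) <= k ->
  sigmaZ a1 a2 mu N x k = x k + Tz a1 a2 N x k - (if k <=? 0 then mu (ik k) else 0).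
Proof.
  intros HN Hs Hk. unfold sigmaZ.
  destruct (Z.leb_spec 1 k).
  - replace (k <=? 0) with false by (symmetry; apply Z.leb_gt; lia). unfold sigma_plus, Tz. ring.
  - replace (k <=? 0) with true by (symmetry; apply Z.leb_le; lia).
    unfold sigma_minus, wt_pair, Tz.
    assert (Hw : zsum (-N) N (fun j => x j * cartan a1 a2 (ik j) (ik k))
               = zsum (-N) (k-1) (fun j => cartan a1 a2 (ik j) (ik k) * x j) + 2 * x k
                 + zsum (k+1) N (fun j => cartan a1 a2 (ik j) (ik k) * x j)).
    { rewrite (zsum_ext (-N) N _ (fun j => cartan a1 a2 (ik j) (ik k) * x j)) by (intros; ring).
      destruct (Z_le_gt_dec (-N) k).
      - rewrite (zsum_split (-N) (k-1) N) by lia. replace (k-1+1) with k by ring.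
        rewrite (zsum_first k N) by lia. rewrite cartan_same. ring.
      - rewrite (zsum_nil (-N) (k-1)) by lia. rewrite (Hs k) by lia.
        rewrite (zsum_split (k+1) (-N-1) N) by lia.
        rewrite (zsum_zero (k+1) (-N-1)). replace (-N-1+1) with (-N) by ring. ring.
        intros j Hj. rewrite (Hs j) by lia. ring. }
    rewrite Hw. ring.
Qed.

Lemma sigma_diff a1 a2 k1 k2 N x k : 0 <= N -> supported N x -> -(N+2) <= k ->
  sigmaZ a1 a2 (lam k1 k2) N x k - sigmaZ a1 a2 (lam k1 k2) N x (k+2) =
  x k - cpar a1 a2 k * x (k+1) + x (k+2) + corr k1 k2 k.
Proof.
  intros HN Hs Hk.
  rewrite !sigmaZ_unif by (auto; lia).
  rewrite (T_rec a1 a2 N x k) by (intros; apply Hs; lia).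
  rewrite ik_add2. unfold corr.
  destruct (Z.eqb_spec k (-1)).
  - subst. cbn -[Z.mul Tz cpar]. ring.
  - destruct (Z.eqb_spec k 0).
    + subst. cbn -[Z.mul Tz cpar]. ring.
    + destruct (Z.leb_spec k 0); destruct (Z.leb_spec (k+2) 0); try lia; ring.
Qed.

Lemma sigma_plus_diff a1 a2 N x k : (forall j, N < j -> x j = 0) ->
  sigma_plus a1 a2 N x k - sigma_plus a1 a2 N x (k+2) = x k - cpar a1 a2 k * x (k+1) + x (k+2).
Proof.
  intros Hx. unfold sigma_plus. fold (Tz a1 a2 N x k). fold (Tz a1 a2 N x (k+2)).
  rewrite T_rec by auto. ring.
Qed.

Lemma sigma_minus_diff a1 a2 N x k : 0 <= N -> (forall j, j < -N -> x j = 0) ->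
  sigma_minus a1 a2 N x (k+2) - sigma_minus a1 a2 N x k = - (x k - cpar a1 a2 k * x (k+1) + x (k+2)).
Proof.
  intros HN Hx. unfold sigma_minus. fold (Uz a1 a2 N x k). fold (Uz a1 a2 N x (k+2)).
  rewrite U_rec by auto. ring.
Qed.

Open Scope Z_scope.
Open Scope bool_scope.

Definition PairForm a1 a2 k1 k2 (x : Z -> Z) : Prop :=
  (forall j, (0 <= Agen a1 a2 k1 k2 j (IZR (x j)) (IZR (x (j+1)%Z)))%R /\
             (0 <= Bgen a1 a2 k1 k2 j (IZR (x j)) (IZR (x (j+1)%Z)))%R) /\
  (forall k, 1 <= k -> (0 <= pR a1 a2 k1 k2 k - IZR (x k))%R) /\
  (forall k, k <= 0 -> (0 <= pR a1 a2 k1 k2 k + IZR (x k))%R).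

Lemma Xi_pair a1 a2 k1 k2 x : Xi_nonneg a1 a2 k1 k2 x <-> PairForm a1 a2 k1 k2 x.
Proof.
  unfold Xi_nonneg, PairForm, Agen, Bgen, pR. cbv zeta. split.
  - intros (H0 & H1 & Hp & Hm). split; [|split].
    + intros j. destruct (Z.leb_spec 1 j).
      * destruct (Hp j) as (A & B & C); auto.
      * destruct (Z.eqb_spec j 0).
        -- subst j. split; assumption.
        -- destruct (Hm (j+1)) as (A & B & C); [lia|].
           replace (j+1-1) with j in * by ring. split; assumption.
    + intros k Hk. destruct (Hp k Hk) as (A & _). exact A.
    + intros k Hk. destruct (Hm k Hk) as (A & _). exact A.
  - intros (HAB & Hp & Hm). split; [|split; [|split]].
    + destruct (HAB 0) as [A _]. exact A.
    + destruct (HAB 0) as [_ B]. exact B.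
    + intros k Hk. destruct (HAB k) as [A B].
      replace (1 <=? k) with true in A, B by (symmetry; apply Z.leb_le; lia).
      split; [apply Hp; auto|]. split; assumption.
    + intros k Hk. destruct (HAB (k-1)) as [A B].
      replace (1 <=? k-1) with false in A, B by (symmetry; apply Z.leb_gt; lia).
      replace (k-1 =? 0) with false in A, B by (symmetry; apply Z.eqb_neq; lia).
      replace (k-1+1) with k in A, B by ring.
      split; [apply Hm; auto|]. split; assumption.
Qed.

Open Scope Z_scope.
Open Scope bool_scope.

Lemma update_R x k d j : IZR (update x k d j) = (IZR (x j) + (if j =? k then IZR d else 0))%R.
Proof. unfold update. destruct (j =? k); rewrite ?plus_IZR; lra. Qed.

Lemma pair_update_e a1 a2 k1 k2 x k :
  PairForm a1 a2 k1 k2 x ->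
  (gammaR a1 a2 k <= Agen a1 a2 k1 k2 k (IZR (x k)) (IZR (x (k+1)%Z)))%R ->
  (1 <= Bgen a1 a2 k1 k2 k (IZR (x k)) (IZR (x (k+1)%Z)))%R ->
  ((k <= 0)%Z -> (1 <= pR a1 a2 k1 k2 k + IZR (x k))%R) ->
  (0 < gammaR a1 a2 (k))%R ->
  PairForm a1 a2 k1 k2 (update x k (-1)).
Proof.
  intros (HAB & Hp & Hm) HA HB Hk Hg. split; [|split].
  - intros j. rewrite !update_R.
    destruct (Z.eqb_spec j k); destruct (Z.eqb_spec (j+1) k); try lia.
    + subst j. rewrite !Agen_lin, !Bgen_lin. lra.
    + rewrite !Agen_lin, !Bgen_lin. destruct (HAB j) as [HA1 HB1]. replace (j+1) with k in * by lia.
      split; nra.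
    + rewrite !Rplus_0_r. apply HAB.
  - intros j Hj. rewrite update_R. specialize (Hp j Hj). destruct (j =? k); lra.
  - intros j Hj. rewrite update_R. specialize (Hm j Hj). destruct (Z.eqb_spec j k).
    + subst. specialize (Hk Hj). lra.
    + lra.
Qed.

Lemma pair_update_f a1 a2 k1 k2 x k :
  PairForm a1 a2 k1 k2 x ->
  (1 <= Agen a1 a2 k1 k2 (k-1) (IZR (x (k-1)%Z)) (IZR (x k)))%R ->
  (gammaR a1 a2 k <= Bgen a1 a2 k1 k2 (k-1) (IZR (x (k-1)%Z)) (IZR (x k)))%R ->
  ((1 <= k)%Z -> (1 <= pR a1 a2 k1 k2 k - IZR (x k))%R) ->
  (0 < gammaR a1 a2 (k))%R ->
  PairForm a1 a2 k1 k2 (update x k 1).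
Proof.
  intros (HAB & Hp & Hm) HA HB Hk Hg. split; [|split].
  - intros j. rewrite !update_R.
    destruct (Z.eqb_spec j k); destruct (Z.eqb_spec (j+1) k); try lia.
    + subst j. rewrite !Agen_lin, !Bgen_lin. destruct (HAB k). nra.
    + rewrite !Agen_lin, !Bgen_lin. replace j with (k-1) in * by lia.
      replace (k-1+1) with k by ring. lra.
    + rewrite !Rplus_0_r. apply HAB.
  - intros j Hj. rewrite update_R. specialize (Hp j Hj). destruct (Z.eqb_spec j k).
    + subst. specialize (Hk Hj). lra.
    + lra.
  - intros j Hj. rewrite update_R. specialize (Hm j Hj). destruct (j =? k); lra.
Qed.

Open Scope Z_scope.
Open Scope bool_scope.

Lemma window_ne i N : 0 <= N -> windowZ i N <> [].
Proof.
  intros HN E. unfold windowZ in E.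
  destruct i.
  - assert (In 1 (par_filter I1 (zrange (-(N+2)) (N+2)))) by (apply in_par; split; [lia|reflexivity]).
    rewrite E in H. inversion H.
  - assert (In 0 (par_filter I2 (zrange (-(N+2)) (N+2)))) by (apply in_par; split; [lia|reflexivity]).
    rewrite E in H. inversion H.
Qed.

Lemma sigmaZ_high a1 a2 mu N x k : supported N x -> 0 <= N -> N < k -> sigmaZ a1 a2 mu N x k = 0.
Proof.
  intros Hs HN Hk. unfold sigmaZ. replace (1 <=? k) with true by (symmetry; apply Z.leb_le; lia).
  unfold sigma_plus. rewrite zsum_nil by lia. rewrite Hs by lia. ring.
Qed.

Lemma sigmaZ_low a1 a2 mu N x k : supported N x -> 0 <= N -> k < -N ->
  sigmaZ a1 a2 mu N x k = - wt_pair a1 a2 mu N x (ik k).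
Proof.
  intros Hs HN Hk. unfold sigmaZ. replace (1 <=? k) with false by (symmetry; apply Z.leb_gt; lia).
  unfold sigma_minus. rewrite zsum_nil by lia. rewrite Hs by lia. ring.
Qed.

Lemma supported_update N x k d : supported N x -> -(N+2) <= k <= N+2 -> supported (N+2) (update x k d).
Proof.
  intros Hs Hk j Hj. unfold update. destruct (Z.eqb_spec j k); [lia|]. apply Hs. lia.
Qed.

Lemma Rdiv_ge1 (A g : R) : (0 < g)%R -> (1 <= A / g)%R -> (g <= A)%R.
Proof.
  intros Hg H. assert (A = (A / g) * g)%R by (field; lra). rewrite H0. nra.
Qed.

Lemma Rdiv_nonneg (A g : R) : (0 < g)%R -> (0 <= A)%R -> (0 <= A / g)%R.
Proof. intros. unfold Rdiv. apply Rmult_le_pos; auto. left. apply Rinv_0_lt_compat; auto. Qed.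

Definition hyps3 (a1 a2 : Z) := 1 <= a1 /\ 1 <= a2 /\ 4 < a1 * a2.

Lemma e_closed a1 a2 k1 k2 x N i : hyps3 a1 a2 ->
  SigmaSet a1 a2 k1 k2 x -> 0 <= N -> supported N x ->
  etildeZ a1 a2 (lam k1 k2) i N x = None \/
  exists y, etildeZ a1 a2 (lam k1 k2) i N x = Some y /\ SigmaSet a1 a2 k1 k2 y.
Proof.
  intros (H1 & H2 & H3) [[Hpos [Hneg _]] HXi] HN Hs.
  apply Xi_pair in HXi. pose proof HXi as HP. destruct HXi as (HAB & Hp & Hm).
  unfold etildeZ, epsZ. cbv zeta.
  set (W := windowZ i N). set (s := sigmaZ a1 a2 (lam k1 k2) N x).
  destruct (0 <? lmax W s) eqn:Hm0; [right|left; reflexivity].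
  apply Z.ltb_lt in Hm0.
  assert (Hd : forall j, In j W -> -(N+3) < j) by (intros j Hj; apply in_par in Hj; lia).
  destruct (argmax_max W s (-(N+3)) (window_ne i N HN) Hd) as (Hin & Hsk & Hle & Hmax).
  set (m := lmax W s) in *. set (k := argmax_of W s m (-(N+3))) in *. clearbody k.
  eexists; split; [reflexivity|].
  pose proof Hin as Hin'. apply in_par in Hin' as [Hkr Hik].
  assert (HkN : k <= N).
  { destruct (Z_le_gt_dec k N); auto. unfold s in Hsk. rewrite sigmaZ_high in Hsk by (auto; lia). lia. }
  assert (Hin2 : In (k+2) W) by (apply in_par; split; [lia|]; rewrite ik_add2; auto).
  assert (Hs2 : s (k+2) < m).
  { specialize (Hle _ Hin2). destruct (Z.eq_dec (s (k+2)) m); [|lia]. specialize (Hmax _ Hin2 e). lia. }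
  assert (HD : x k - cpar a1 a2 k * x (k+1) + x (k+2) + corr k1 k2 k >= 1).
  { rewrite <- (sigma_diff a1 a2 k1 k2 N x k) by (auto; lia). unfold s in Hsk, Hs2. lia. }
  apply Z.ge_le in HD. apply IZR_le in HD.
  destruct (D_AB a1 a2 k1 k2 x k H1 H2 H3) as [DA DB].
  pose proof (gam_pos a1 a2 k H1 H2 H3) as Gp.
  destruct (HAB (k+1)) as [A1 B1].
  replace (k+1+1) with (k+2) in A1, B1 by ring.
  assert (HA : (gammaR a1 a2 k <= Agen a1 a2 k1 k2 k (IZR (x k)) (IZR (x (k+1)%Z)))%R).
  { apply Rdiv_ge1; auto. lra. }
  assert (HB : (1 <= Bgen a1 a2 k1 k2 k (IZR (x k)) (IZR (x (k+1)%Z)))%R).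
  { pose proof (Rdiv_nonneg _ _ Gp B1). lra. }
  assert (Hpk : (k <= 0)%Z -> (1 <= pR a1 a2 k1 k2 k + IZR (x k))%R).
  { intros Hk0. unfold Agen in HA.
    replace (1 <=? k) with false in HA by (symmetry; apply Z.leb_gt; lia).
    destruct (Z.eqb_spec k 0).
    - subst k. assert (0 <= x 1) by (apply Hpos; lia). apply IZR_le in H. replace (0+1) with 1 in HA by reflexivity. nra.
    - assert (Hm1 := Hm (k+1) ltac:(lia)). nra. }
  assert (Hxk : (1 <= k)%Z -> 1 <= x k).
  { intros Hk1. unfold Agen in HA. replace (1 <=? k) with true in HA by (symmetry; apply Z.leb_le; lia).
    assert (0 <= x (k+1)) by (apply Hpos; lia). apply IZR_le in H.
    apply le_IZR. nra. }
  split.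
  - split; [|split].
    + intros j Hj. unfold update. destruct (Z.eqb_spec j k). subst; specialize (Hxk Hj); lia. auto.
    + intros j Hj. unfold update. destruct (Z.eqb_spec j k). subst; specialize (Hneg _ Hj); lia. auto.
    + exists (N+2). apply supported_update; auto; lia.
  - apply Xi_pair. apply pair_update_e; auto.
Qed.

Lemma f_closed a1 a2 k1 k2 x N i : hyps3 a1 a2 ->
  SigmaSet a1 a2 k1 k2 x -> 0 <= N -> supported N x ->
  ftildeZ a1 a2 (lam k1 k2) i N x = None \/
  exists y, ftildeZ a1 a2 (lam k1 k2) i N x = Some y /\ SigmaSet a1 a2 k1 k2 y.
Proof.
  intros (H1 & H2 & H3) [[Hpos [Hneg _]] HXi] HN Hs.
  apply Xi_pair in HXi. pose proof HXi as HP. destruct HXi as (HAB & Hp & Hm).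
  unfold ftildeZ, phiZ, epsZ. cbv zeta.
  set (W := windowZ i N). set (s := sigmaZ a1 a2 (lam k1 k2) N x).
  destruct (0 <? lmax W s + wt_pair a1 a2 (lam k1 k2) N x i) eqn:Hm0; [right|left; reflexivity].
  apply Z.ltb_lt in Hm0.
  assert (Hd : forall j, In j W -> j < N+3) by (intros j Hj; apply in_par in Hj; lia).
  destruct (argmin_max W s (N+3) (window_ne i N HN) Hd) as (Hin & Hsk & Hle & Hmin).
  set (m := lmax W s) in *. set (k := argmin_of W s m (N+3)) in *. clearbody k.
  eexists; split; [reflexivity|].
  pose proof Hin as Hin'. apply in_par in Hin' as [Hkr Hik].
  assert (HkN : -N <= k).
  { destruct (Z_le_gt_dec (-N) k); auto. unfold s in Hsk. rewrite sigmaZ_low in Hsk by (auto; lia).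
    rewrite Hik in Hsk. lia. }
  assert (Hin2 : In (k-2) W).
  { apply in_par; split; [lia|]. rewrite <- Hik. rewrite <- (ik_add2 (k-2)). f_equal. ring. }
  assert (Hs2 : s (k-2) < m).
  { specialize (Hle _ Hin2). destruct (Z.eq_dec (s (k-2)) m); [|lia]. specialize (Hmin _ Hin2 e). lia. }
  assert (HD : x (k-2) - cpar a1 a2 (k-2) * x (k-2+1) + x (k-2+2) + corr k1 k2 (k-2) <= -1).
  { rewrite <- (sigma_diff a1 a2 k1 k2 N x (k-2)) by (auto; lia). unfold s in Hsk, Hs2.
    replace (k-2+2) with k by ring. lia. }
  apply IZR_le in HD.
  destruct (D_AB a1 a2 k1 k2 x (k-2) H1 H2 H3) as [DA DB].
  pose proof (gam_pos a1 a2 k H1 H2 H3) as Gp.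
  replace (k-2+2) with k in DA, DB, HD by ring.
  replace (k-2+1) with (k-1) in DA, DB, HD by ring.
  replace (gammaR a1 a2 (k-2)) with (gammaR a1 a2 k) in DA, DB
    by (rewrite <- (gam_add2 a1 a2 (k-2)); f_equal; ring).
  destruct (HAB (k-2)) as [A1 B1].
  replace (k-2+1) with (k-1) in A1, B1 by ring.
  assert (HA : (1 <= Agen a1 a2 k1 k2 (k-1) (IZR (x (k-1)%Z)) (IZR (x k)))%R).
  { pose proof (Rdiv_nonneg _ _ Gp A1). lra. }
  assert (HB : (gammaR a1 a2 k <= Bgen a1 a2 k1 k2 (k-1) (IZR (x (k-1)%Z)) (IZR (x k)))%R).
  { apply Rdiv_ge1; auto. lra. }
  clear DA DB HD.
  assert (Hpk : (1 <= k)%Z -> (1 <= pR a1 a2 k1 k2 k - IZR (x k))%R).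
  { intros Hk1. unfold Bgen in HB. replace (k-1+1) with k in HB by ring.
    destruct (Z.eqb_spec k 1).
    - subst k. replace (1-1) with 0 in HB by reflexivity. simpl in HB.
      assert (x 0 <= 0) by (apply Hneg; lia). apply IZR_le in H. nra.
    - replace (1 <=? k-1) with true in HB by (symmetry; apply Z.leb_le; lia).
      assert (Hp1 := Hp (k-1) ltac:(lia)). nra. }
  assert (Hxk : (k <= 0)%Z -> x k <= -1).
  { intros Hk0. unfold Bgen in HB. replace (k-1+1) with k in HB by ring.
    replace (1 <=? k-1) with false in HB by (symmetry; apply Z.leb_gt; lia).
    replace (k-1 =? 0) with false in HB by (symmetry; apply Z.eqb_neq; lia).
    assert (x (k-1) <= 0) by (apply Hneg; lia). apply IZR_le in H.
    apply le_IZR. nra. }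
  split.
  - split; [|split].
    + intros j Hj. unfold update. destruct (Z.eqb_spec j k). subst; specialize (Hpos _ Hj); lia. auto.
    + intros j Hj. unfold update. destruct (Z.eqb_spec j k). subst; specialize (Hxk Hj); lia. auto.
    + exists (N+2). apply supported_update; auto; lia.
  - apply Xi_pair. apply pair_update_f; auto.
Qed.

Open Scope Z_scope.
Open Scope bool_scope.

Lemma sigma_plus_update a1 a2 N y k d j : ik j = ik k -> 1 <= k <= N ->
  sigma_plus a1 a2 N (update y k d) j = sigma_plus a1 a2 N y j + (if j =? k then d else 0) + (if j <? k then 2*d else 0).
Proof.
  intros Hik Hk. unfold sigma_plus.
  rewrite (zsum_ext (j+1) N _ (fun l => cartan a1 a2 (ik l) (ik j) * y l + (if l =? k then 2 * d else 0))).
  - rewrite zsum_add, zsum_delta. unfold update.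
    destruct (Z.eqb_spec j k); destruct (Z.ltb_spec j k); destruct (Z.leb_spec (j+1) k); destruct (Z.leb_spec k N);
      simpl; try lia.
  - intros l Hl. unfold update. destruct (Z.eqb_spec l k).
    + subst l. rewrite <- Hik, cartan_same. ring.
    + ring.
Qed.

Lemma sigma_minus_update a1 a2 N z k d j : ik j = ik k -> -N <= k <= 0 ->
  sigma_minus a1 a2 N (update z k d) j = sigma_minus a1 a2 N z j - (if j =? k then d else 0) - (if k <? j then 2*d else 0).
Proof.
  intros Hik Hk. unfold sigma_minus.
  rewrite (zsum_ext (-N) (j-1) _ (fun l => cartan a1 a2 (ik l) (ik j) * z l + (if l =? k then 2 * d else 0))).
  - rewrite zsum_add, zsum_delta. unfold update.
    destruct (Z.eqb_spec j k); destruct (Z.ltb_spec k j); destruct (Z.leb_spec (-N) k); destruct (Z.leb_spec k (j-1));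
      simpl; try lia.
  - intros l Hl. unfold update. destruct (Z.eqb_spec l k).
    + subst l. rewrite <- Hik, cartan_same. ring.
    + ring.
Qed.

Lemma last_nz (y : Z -> Z) N k0 : (forall k, N < k -> y k = 0) -> y k0 <> 0 ->
  exists n, y n <> 0 /\ forall j, n < j -> y j = 0.
Proof.
  intros Hy. remember (Z.to_nat (N - k0)) as m eqn:Hm. revert k0 Hm.
  induction m as [m IH] using (well_founded_induction lt_wf).
  intros k0 Hm Hk0.
  destruct (classic (exists j, k0 < j /\ y j <> 0)) as [[j [Hj Hyj]]|Hno].
  - assert (j <= N) by (destruct (Z_le_gt_dec j N); auto; exfalso; apply Hyj; apply Hy; lia).
    assert (k0 <= N) by (destruct (Z_le_gt_dec k0 N); auto; exfalso; apply Hk0; apply Hy; lia).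
    apply (IH (Z.to_nat (N - j))) with (k0 := j); auto. lia.
  - exists k0. split; auto. intros j Hj. apply NNPP. intro. apply Hno. eauto.
Qed.

Lemma first_nz (y : Z -> Z) N k0 : (forall k, k < -N -> y k = 0) -> y k0 <> 0 ->
  exists n, y n <> 0 /\ forall j, j < n -> y j = 0.
Proof.
  intros Hy Hk0.
  destruct (last_nz (fun k => y (-k)) N (-k0)) as [n [Hn Hj]].
  - intros k Hk. apply Hy. lia.
  - rewrite Z.opp_involutive. auto.
  - exists (-n). split; auto. intros j Hjn. specialize (Hj (-j) ltac:(lia)). rewrite Z.opp_involutive in Hj. auto.
Qed.

Open Scope Z_scope.
Open Scope bool_scope.

Definition SPlus a1 a2 N (y : Z -> Z) : Prop :=
  (forall k, (k < 1 \/ N < k) -> y k = 0) /\ (forall k, 0 <= y k) /\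
  (forall j, 1 <= j -> (0 <= gammaR a1 a2 j * IZR (y j) - IZR (y (j+1)%Z))%R).

Lemma plus_step a1 a2 N y : hyps3 a1 a2 -> 0 <= N -> SPlus a1 a2 N y -> (exists k, y k <> 0) ->
  exists i y', SPlus a1 a2 N y' /\ zsum 1 N y' = zsum 1 N y - 1 /\ fplus a1 a2 i N y' = y.
Proof.
  intros (H1 & H2 & H3) HN (Hsup & Hnn & Hg) [k0 Hk0].
  destruct (last_nz y N k0) as [n [Hn Hlast]]; [intros; apply Hsup; lia | auto |].
  assert (Hn1 : 1 <= n <= N) by (destruct (Z_le_gt_dec 1 n); destruct (Z_le_gt_dec n N); try lia;
     exfalso; apply Hn; apply Hsup; lia).
  set (i := ik n).
  set (l := par_filter i (zrange 1 (N+2))).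
  set (s := sigma_plus a1 a2 N y).
  assert (Hnl : In n l) by (apply in_par; split; [lia|reflexivity]).
  assert (Hsn : s n = y n).
  { unfold s, sigma_plus. rewrite zsum_zero. ring. intros j Hj. rewrite Hlast by lia. ring. }
  assert (Hne : l <> []) by (intro E; rewrite E in Hnl; inversion Hnl).
  assert (Hd : forall j, In j l -> 0 < j) by (intros j Hj; apply in_par in Hj; lia).
  destruct (argmax_max l s 0 Hne Hd) as (Hin & Hsk & Hle & Hmax).
  set (m := lmax l s) in *. set (k := argmax_of l s m 0) in *. clearbody k.
  assert (Hm0 : 0 < m) by (specialize (Hle n Hnl); specialize (Hnn n); lia).
  pose proof Hin as Hin'. apply in_par in Hin' as [Hkr Hik].
  assert (HkN : k <= N).
  { destruct (Z_le_gt_dec k N); auto. unfold s, sigma_plus in Hsk. rewrite zsum_nil in Hsk by lia.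
    rewrite Hsup in Hsk by lia. lia. }
  assert (Hin2 : In (k+2) l) by (apply in_par; split; [lia|]; rewrite ik_add2; auto).
  assert (Hs2 : s (k+2) < m).
  { specialize (Hle _ Hin2). destruct (Z.eq_dec (s (k+2)) m); [|lia]. specialize (Hmax _ Hin2 e). lia. }
  assert (HD : y k - cpar a1 a2 k * y (k+1) + y (k+2) + corr 0 0 k >= 1).
  { unfold corr. destruct (k =? -1); destruct (k =? 0);
    rewrite <- (sigma_plus_diff a1 a2 N y k) by (intros; apply Hsup; lia); unfold s in Hsk, Hs2; lia. }
  apply Z.ge_le in HD. apply IZR_le in HD.
  destruct (D_AB a1 a2 0 0 y k H1 H2 H3) as [DA _].
  pose proof (gam_pos a1 a2 k H1 H2 H3) as Gp.
  unfold Agen in DA.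
  replace (1 <=? k) with true in DA by (symmetry; apply Z.leb_le; lia).
  replace (1 <=? k+1) with true in DA by (symmetry; apply Z.leb_le; lia).
  pose proof (Hg (k+1) ltac:(lia)) as G1. replace (k+1+1) with (k+2) in G1 by ring.
  assert (HA : (gammaR a1 a2 k <= gammaR a1 a2 k * IZR (y k) - IZR (y (k+1)%Z))%R).
  { apply Rdiv_ge1; auto. lra. }
  assert (Hyk : 1 <= y k).
  { pose proof (Hnn (k+1)) as Hp. apply IZR_le in Hp. apply le_IZR. nra. }
  exists i, (update y k (-1)). split; [|split].
  - split; [|split].
    + intros j Hj. unfold update. destruct (Z.eqb_spec j k); [lia|]. auto.
    + intros j. unfold update. destruct (Z.eqb_spec j k); [subst; lia|]. auto.
    + intros j Hj. rewrite !update_R. destruct (Z.eqb_spec j k); destruct (Z.eqb_spec (j+1) k); try lia.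
      * subst j. specialize (Hg k Hj). lra.
      * specialize (Hg j Hj). replace (j+1) with k in * by lia. lra.
      * specialize (Hg j Hj). lra.
  - rewrite (zsum_ext 1 N _ (fun j => y j + (if j =? k then -1 else 0))) by (intros; unfold update; destruct (j =? k); ring).
    rewrite zsum_add, zsum_delta.
    replace ((1 <=? k) && (k <=? N)) with true by (symmetry; apply andb_true_intro; split; apply Z.leb_le; lia).
    ring.
  - unfold fplus. cbv zeta. fold l.
    set (s' := sigma_plus a1 a2 N (update y k (-1))).
    assert (Hs' : forall j, In j l -> s' j = s j + (if j =? k then -1 else 0) + (if j <? k then -2 else 0)).
    { intros j Hj. apply in_par in Hj as [_ Hj]. unfold s', s. rewrite sigma_plus_update.
      reflexivity. rewrite Hj, Hik; reflexivity. lia. }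
    assert (HM : lmax l s' = m - 1).
    { apply lmax_unique.
      - exists k. split; auto. rewrite Hs' by auto. rewrite Z.eqb_refl, Z.ltb_irrefl. lia.
      - intros j Hj. rewrite Hs' by auto. specialize (Hle j Hj).
        destruct (Z.eqb_spec j k); destruct (Z.ltb_spec j k); try lia.
        destruct (Z.eq_dec (s j) m); [specialize (Hmax j Hj e); lia | lia]. }
    rewrite HM.
    rewrite (argmin_unique l s' (m-1) (N+3) k).
    + apply functional_extensionality. intros j. unfold update. destruct (Z.eqb_spec j k); [subst|]; ring.
    + intros j Hj. apply in_par in Hj. lia.
    + auto.
    + rewrite Hs' by auto. rewrite Z.eqb_refl, Z.ltb_irrefl. lia.
    + intros j Hj Hsj. rewrite Hs' in Hsj by auto. specialize (Hle j Hj).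
      destruct (Z.eqb_spec j k); destruct (Z.ltb_spec j k); lia.
Qed.

Lemma SPlus_ImPlus a1 a2 N y : hyps3 a1 a2 -> 0 <= N -> SPlus a1 a2 N y -> ImPlus a1 a2 y.
Proof.
  intros Hh HN. remember (Z.to_nat (zsum 1 N y)) as n eqn:Hn. revert y Hn.
  induction n as [n IH] using (well_founded_induction lt_wf). intros y Hn Hy.
  destruct (classic (exists k, y k <> 0)) as [Hnz|Hz].
  - destruct (plus_step a1 a2 N y Hh HN Hy Hnz) as [i [y' [Hy' [Hsum Hf]]]].
    assert (Hpos : 0 <= zsum 1 N y').
    { clear -Hy'. destruct Hy' as (_ & Hnn & _). revert Hnn.
      generalize 1 N. apply (zsum_ind_gen (fun lo hi => (forall k, 0 <= y' k) -> 0 <= zsum lo hi y')).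
      - intros. rewrite zsum_nil; lia.
      - intros lo hi H IH Hnn. rewrite zsum_first by auto. specialize (IH Hnn). specialize (Hnn lo). lia. }
    rewrite <- Hf. apply ImPlusF; auto.
    + apply (IH (Z.to_nat (zsum 1 N y'))); auto. lia.
    + destruct Hy' as (Hs & _). intros k Hk. apply Hs. lia.
  - replace y with (fun _ : Z => 0). apply ImPlus0.
    apply functional_extensionality. intros k. apply NNPP. intro. apply Hz. exists k. auto.
Qed.

Open Scope Z_scope.
Open Scope bool_scope.

Definition SMinus a1 a2 N (z : Z -> Z) : Prop :=
  (forall k, (k < -N \/ 0 < k) -> z k = 0) /\ (forall k, z k <= 0) /\
  (forall j, j <= -1 -> (0 <= IZR (z j) - gammaR a1 a2 (j+1) * IZR (z (j+1)%Z))%R).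

Lemma minus_step a1 a2 N z : hyps3 a1 a2 -> 0 <= N -> SMinus a1 a2 N z -> (exists k, z k <> 0) ->
  exists i z', SMinus a1 a2 N z' /\ zsum (-N) 0 z' = zsum (-N) 0 z + 1 /\ eminus a1 a2 i N z' = z.
Proof.
  intros (H1 & H2 & H3) HN (Hsup & Hnp & Hg) [k0 Hk0].
  destruct (first_nz z N k0) as [n [Hn Hfirst]]; [intros; apply Hsup; lia | auto |].
  assert (Hn1 : -N <= n <= 0) by (destruct (Z_le_gt_dec (-N) n); destruct (Z_le_gt_dec n 0); try lia;
     exfalso; apply Hn; apply Hsup; lia).
  set (i := ik n).
  set (l := par_filter i (zrange (-(N+2)) 0)).
  set (s := sigma_minus a1 a2 N z).
  assert (Hnl : In n l) by (apply in_par; split; [lia|reflexivity]).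
  assert (Hsn : s n = - z n).
  { unfold s, sigma_minus. rewrite zsum_zero. ring. intros j Hj. rewrite Hfirst by lia. ring. }
  assert (Hne : l <> []) by (intro E; rewrite E in Hnl; inversion Hnl).
  assert (Hd : forall j, In j l -> j < 1) by (intros j Hj; apply in_par in Hj; lia).
  destruct (argmin_max l s 1 Hne Hd) as (Hin & Hsk & Hle & Hmin).
  set (m := lmax l s) in *. set (k := argmin_of l s m 1) in *. clearbody k.
  assert (Hm0 : 0 < m) by (specialize (Hle n Hnl); specialize (Hnp n); lia).
  pose proof Hin as Hin'. apply in_par in Hin' as [Hkr Hik].
  assert (HkN : -N <= k).
  { destruct (Z_le_gt_dec (-N) k); auto. unfold s, sigma_minus in Hsk. rewrite zsum_nil in Hsk by lia.
    rewrite Hsup in Hsk by lia. lia. }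
  assert (Hin2 : In (k-2) l).
  { apply in_par; split; [lia|]. rewrite <- Hik. rewrite <- (ik_add2 (k-2)). f_equal. ring. }
  assert (Hs2 : s (k-2) < m).
  { specialize (Hle _ Hin2). destruct (Z.eq_dec (s (k-2)) m); [|lia]. specialize (Hmin _ Hin2 e). lia. }
  assert (HD : z (k-2) - cpar a1 a2 (k-2) * z (k-2+1) + z (k-2+2) + corr 0 0 (k-2) <= -1).
  { pose proof (sigma_minus_diff a1 a2 N z (k-2) HN) as SD.
    replace (k-2+2) with k in * by ring.
    unfold corr. destruct (k-2 =? -1); destruct (k-2 =? 0);
    (rewrite SD in *; [unfold s in Hsk, Hs2; lia | intros; apply Hsup; lia]) || 
    (assert (sigma_minus a1 a2 N z k - sigma_minus a1 a2 N z (k-2) = - (z (k - 2) - cpar a1 a2 (k - 2) * z (k - 2 + 1) + z k)) by (apply SD; intros; apply Hsup; lia);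
     unfold s in Hsk, Hs2; lia). }
  apply IZR_le in HD.
  destruct (D_AB a1 a2 0 0 z (k-2) H1 H2 H3) as [_ DB].
  pose proof (gam_pos a1 a2 k H1 H2 H3) as Gp.
  replace (k-2+2) with k in DB, HD by ring.
  replace (k-2+1) with (k-1) in DB, HD by ring.
  replace (gammaR a1 a2 (k-2)) with (gammaR a1 a2 k) in DB
    by (rewrite <- (gam_add2 a1 a2 (k-2)); f_equal; ring).
  unfold Bgen in DB.
  replace (1 <=? k-2) with false in DB by (symmetry; apply Z.leb_gt; lia).
  replace (1 <=? k-1) with false in DB by (symmetry; apply Z.leb_gt; lia).
  replace (k-2 =? 0) with false in DB by (symmetry; apply Z.eqb_neq; lia).
  replace (k-1 =? 0) with false in DB by (symmetry; apply Z.eqb_neq; lia).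
  replace (k-2+1) with (k-1) in DB by ring.
  replace (k-1+1) with k in DB by ring.
  pose proof (Hg (k-2) ltac:(lia)) as G1. replace (k-2+1) with (k-1) in G1 by ring.
  assert (HB : (gammaR a1 a2 k <= IZR (z (k-1)%Z) - gammaR a1 a2 k * IZR (z k))%R).
  { apply Rdiv_ge1; auto. lra. }
  assert (Hzk : z k <= -1).
  { pose proof (Hnp (k-1)) as Hp. apply IZR_le in Hp. apply le_IZR. nra. }
  exists i, (update z k 1). split; [|split].
  - split; [|split].
    + intros j Hj. unfold update. destruct (Z.eqb_spec j k); [lia|]. auto.
    + intros j. unfold update. destruct (Z.eqb_spec j k); [subst; lia|]. auto.
    + intros j Hj. rewrite !update_R. destruct (Z.eqb_spec j k); destruct (Z.eqb_spec (j+1) k); try lia.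
      * subst j. specialize (Hg k Hj). lra.
      * replace j with (k-1) in * by lia. replace (k-1+1) with k by ring. lra.
      * specialize (Hg j Hj). lra.
  - rewrite (zsum_ext (-N) 0 _ (fun j => z j + (if j =? k then 1 else 0))) by (intros; unfold update; destruct (j =? k); ring).
    rewrite zsum_add, zsum_delta.
    replace ((-N <=? k) && (k <=? 0)) with true by (symmetry; apply andb_true_intro; split; apply Z.leb_le; lia).
    ring.
  - unfold eminus. cbv zeta. fold l.
    set (s' := sigma_minus a1 a2 N (update z k 1)).
    assert (Hs' : forall j, In j l -> s' j = s j - (if j =? k then 1 else 0) - (if k <? j then 2 else 0)).
    { intros j Hj. apply in_par in Hj as [_ Hj]. unfold s', s. rewrite sigma_minus_update.
      reflexivity. rewrite Hj, Hik; reflexivity. lia. }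
    assert (HM : lmax l s' = m - 1).
    { apply lmax_unique.
      - exists k. split; auto. rewrite Hs' by auto. rewrite Z.eqb_refl, Z.ltb_irrefl. lia.
      - intros j Hj. rewrite Hs' by auto. specialize (Hle j Hj).
        destruct (Z.eqb_spec j k); destruct (Z.ltb_spec k j); try lia.
        destruct (Z.eq_dec (s j) m); [specialize (Hmin j Hj e); lia | lia]. }
    rewrite HM.
    rewrite (argmax_unique l s' (m-1) (-(N+3)) k).
    + apply functional_extensionality. intros j. unfold update. destruct (Z.eqb_spec j k); [subst|]; ring.
    + intros j Hj. apply in_par in Hj. lia.
    + auto.
    + rewrite Hs' by auto. rewrite Z.eqb_refl, Z.ltb_irrefl. lia.
    + intros j Hj Hsj. rewrite Hs' in Hsj by auto. specialize (Hle j Hj).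
      destruct (Z.eqb_spec j k); destruct (Z.ltb_spec k j); lia.
Qed.

Lemma zsum_nonpos lo hi f : (forall k, f k <= 0) -> zsum lo hi f <= 0.
Proof.
  intros Hf. revert lo hi. apply (zsum_ind_gen (fun lo hi => zsum lo hi f <= 0)).
  - intros. rewrite zsum_nil; lia.
  - intros lo hi H IH. rewrite zsum_first by auto. specialize (Hf lo). lia.
Qed.

Lemma SMinus_ImMinus a1 a2 N z : hyps3 a1 a2 -> 0 <= N -> SMinus a1 a2 N z -> ImMinus a1 a2 z.
Proof.
  intros Hh HN. remember (Z.to_nat (- zsum (-N) 0 z)) as n eqn:Hn. revert z Hn.
  induction n as [n IH] using (well_founded_induction lt_wf). intros z Hn Hz.
  destruct (classic (exists k, z k <> 0)) as [Hnz|Hzz].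
  - destruct (minus_step a1 a2 N z Hh HN Hz Hnz) as [i [z' [Hz' [Hsum Hf]]]].
    assert (Hneg : zsum (-N) 0 z' <= 0).
    { destruct Hz' as (_ & Hnp & _). apply zsum_nonpos. auto. }
    rewrite <- Hf. apply ImMinusE; auto.
    + apply (IH (Z.to_nat (- zsum (-N) 0 z'))); auto. lia.
    + destruct Hz' as (Hs & _). intros k Hk. apply Hs. lia.
  - replace z with (fun _ : Z => 0). apply ImMinus0.
    apply functional_extensionality. intros k. apply NNPP. intro. apply Hzz. exists k. auto.
Qed.

Open Scope Z_scope.
Open Scope bool_scope.

Lemma Sigma_ImPsi a1 a2 k1 k2 x : hyps3 a1 a2 -> SigmaSet a1 a2 k1 k2 x -> ImPsi a1 a2 x.
Proof.
  intros Hh [[Hpos [Hneg [N0 Hs0]]] HXi].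
  apply Xi_pair in HXi. destruct HXi as (HAB & _ & _).
  set (N := Z.abs N0).
  assert (Hs : supported N x) by (intros k Hk; apply Hs0; lia).
  assert (HN : 0 <= N) by lia.
  split.
  - exists (fun k => if 1 <=? k then x k else 0). split.
    + apply (SPlus_ImPlus a1 a2 N); auto. split; [|split].
      * intros k Hk. destruct (Z.leb_spec 1 k); [apply Hs; lia|reflexivity].
      * intros k. destruct (Z.leb_spec 1 k); [apply Hpos; lia|lia].
      * intros j Hj. replace (1 <=? j) with true by (symmetry; apply Z.leb_le; lia).
        replace (1 <=? j+1) with true by (symmetry; apply Z.leb_le; lia).
        destruct (HAB j) as [A _]. unfold Agen in A.
        replace (1 <=? j) with true in A by (symmetry; apply Z.leb_le; lia). exact A.
    + intros k Hk. replace (1 <=? k) with true by (symmetry; apply Z.leb_le; lia). reflexivity.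
  - exists (fun k => if k <=? 0 then x k else 0). split.
    + apply (SMinus_ImMinus a1 a2 N); auto. split; [|split].
      * intros k Hk. destruct (Z.leb_spec k 0); [apply Hs; lia|reflexivity].
      * intros k. destruct (Z.leb_spec k 0); [apply Hneg; lia|lia].
      * intros j Hj. replace (j <=? 0) with true by (symmetry; apply Z.leb_le; lia).
        replace (j+1 <=? 0) with true by (symmetry; apply Z.leb_le; lia).
        destruct (HAB j) as [_ B]. unfold Bgen in B.
        replace (1 <=? j) with false in B by (symmetry; apply Z.leb_gt; lia).
        replace (j =? 0) with false in B by (symmetry; apply Z.eqb_neq; lia). exact B.
    + intros k Hk. replace (k <=? 0) with true by (symmetry; apply Z.leb_le; lia). reflexivity.
Qed.

Theorem theorem3p2 (a1 a2 k1 k2 : Z) :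
  standing_hyps a1 a2 k1 k2 ->
  (forall x : Z -> Z, SigmaSet a1 a2 k1 k2 x -> ImPsi a1 a2 x) /\
  (forall (x : Z -> Z) (N : Z) (i : idx),
     SigmaSet a1 a2 k1 k2 x -> (0 <= N)%Z -> supported N x ->
     (etildeZ a1 a2 (lam k1 k2) i N x = None \/
      exists y, etildeZ a1 a2 (lam k1 k2) i N x = Some y /\ SigmaSet a1 a2 k1 k2 y) /\
     (ftildeZ a1 a2 (lam k1 k2) i N x = None \/
      exists y, ftildeZ a1 a2 (lam k1 k2) i N x = Some y /\ SigmaSet a1 a2 k1 k2 y)).
Proof.
  intros (H1 & H2 & H3 & _).
  assert (Hh : hyps3 a1 a2) by (repeat split; auto).
  split.
  - intros x Hx. apply (Sigma_ImPsi a1 a2 k1 k2); auto.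
  - intros x N i Hx HN Hs. split.
    + apply e_closed; auto.
    + apply f_closed; auto.
Qed.
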